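(* Let $G$ be an $r$-graph, $\mathcal{P}$ a partition of $E(G)$, and $A,B\subseteq\mathbb{N}$. Suppose that for all $F,H\in\mathcal{M}'$ that are $(A,B)$-mergeable, there exist $F',H'\in\mathcal{P}$ with $F'\subseteq F$, $H'\subseteq H$ such that $F'$ and $H'$ are $(A,B)$-mergeable. Then for every $F\in\mathcal{M}'$ and every $F_0\in\mathcal{M}'$ with $F_0\subseteq F$, there is an ordering $F_1,\dots,F_s$ of the elements of $\mathcal{P}$ contained in $F\setminus F_0$ such that for every $i\in[s]$ the subgraphs $\bigcup_{j=0}^{i-1}F_j$ and $F_i$ are $\{A,B\}$-mergeable (in particular, $\bigcup_{j=0}^iF_j\in\mathcal{M}'$ for every $i$).
   Context: An $r$-graph is an $r$-uniform hypergraph; subgraphs of $G$ are identified with their edge sets, and their vertex sets are the unions of their edges. For an $r$-graph $F$ and distinct vertices $x,y$ (not necessarily in $F$), $C_F(xy)$ is the set of integers $i\geq 0$ for which there exist $i$ distinct edges $X_1,\dots,X_i$ of $F$ with $|\{x,y\}\cup\bigcup_{j=1}^iX_j|\le ri-2i+2$. For $A,B\subseteq\mathbb{N}$, two edge-disjoint subgraphs $F,H\subseteq G$ are $(A,B)$-mergeable (via $uv$) if there is a pair $uv$ with $A\subseteq C_F(uv)$ and $B\subseteq C_H(uv)$; they are $\{A,B\}$-mergeable if $F,H$ are $(A,B)$-mergeable or $H,F$ are $(A,B)$-mergeable. Given a partition $\mathcal{P}$ of $E(G)$, $\mathcal{M}'=\mathcal{M}'_{\{A,B\}}(\mathcal{P})$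 is the smallest family of subgraphs of $G$ containing all elements of $\mathcal{P}$ and closed under taking the union of two $\{A,B\}$-mergeable members (its elements are called partial $\{A,B\}$-clusters; each is a union of elements of $\mathcal{P}$). *)

(* Defs.v *)
From mathcomp Require Import all_boot.
Set Implicit Arguments. Unset Strict Implicit. Unset Printing Implicit Defensive.

(* Vertices live in a finite type V; an edge is a {set V}; a (sub)graph is
   identified with its edge set, a {set {set V}}. *)

Definition is_rgraph (V : finType) (r : nat) (G : {set {set V}}) : Prop :=
  forall e, e \in G -> #|e| = r.

(* i \in C_F(xy): there are i distinct edges X_1..X_i of F with
   |{x,y} u X_1 u ... u X_i| <= r*i - 2*i + 2 (stated additively in nat). *)
Definition inC (V : finType) (r : nat) (F : {set {set V}}) (x y : V) (i : nat)
  : Prop :=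
  exists S : {set {set V}},
    [/\ S \subset F, #|S| = i &
        #|[set x; y] :|: \bigcup_(X in S) X| + 2 * i <= r * i + 2].

Definition mergeable (V : finType) (r : nat) (G : {set {set V}})
  (A B : nat -> Prop) (F H : {set {set V}}) : Prop :=
  [/\ F \subset G, H \subset G, [disjoint F & H] &
      exists u v : V, u != v /\
        (forall i, A i -> inC r F u v i) /\ (forall i, B i -> inC r H u v i)].

Definition mergeable2 (V : finType) (r : nat) (G : {set {set V}})
  (A B : nat -> Prop) (F H : {set {set V}}) : Prop :=
  mergeable r G A B F H \/ mergeable r G A B H F.

(* Partial {A,B}-clusters M'_{A,B}(P): the smallest family containing P and
   closed under unions of two {A,B}-mergeable members. *)
Inductive partial_cluster (V : finType) (r : nat) (G : {set {set V}})
  (P : {set {set {set V}}}) (A B : nat -> Prop) : {set {set V}} -> Prop :=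
| pc_base F : F \in P -> partial_cluster r G P A B F
| pc_merge F H : partial_cluster r G P A B F -> partial_cluster r G P A B H ->
    mergeable2 r G A B F H -> partial_cluster r G P A B (F :|: H).

(* Main.v *)
Require Import Defs.
From mathcomp Require Import all_boot.
Set Implicit Arguments. Unset Strict Implicit.

Lemma disjUl (T : finType) (A B C : {set T}) :
  [disjoint A :|: B & C] = [disjoint A & C] && [disjoint B & C].
Proof. by rewrite !disjoints_subset subUset. Qed.

Lemma inC_mono (V : finType) r (F F' : {set {set V}}) u v i :
  F \subset F' -> inC r F u v i -> inC r F' u v i.
Proof. move=> sub [S [sS cS hS]]; exists S; split => //; exact: subset_trans sS sub. Qed.

Lemma mergeL (V : finType) r G A B (F K H : {set {set V}}) :
  mergeable r G A B F H -> F \subset K -> K \subset G -> [disjoint K & H] ->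
  mergeable r G A B K H.
Proof.
move=> [_ sH _ [u [v [uv [hA hB]]]]] sFK sKG dKH; split => //; exists u, v.
split => //; split => // i /hA; exact: inC_mono.
Qed.

Lemma mergeR (V : finType) r G A B (F K H : {set {set V}}) :
  mergeable r G A B H F -> F \subset K -> K \subset G -> [disjoint H & K] ->
  mergeable r G A B H K.
Proof.
move=> [sH _ _ [u [v [uv [hA hB]]]]] sFK sKG dKH; split => //; exists u, v.
split => //; split => // i /hB; exact: inC_mono.
Qed.

Lemma pc_sub (V : finType) r G (P : {set {set {set V}}}) A B F :
  partition P G -> partial_cluster r G P A B F -> F \subset G.
Proof.
move=> hP; elim => [X XP | F1 H _ hF _ hH _].
  by move/and3P: hP => [/eqP <- _ _]; exact: bigcup_sup.
by rewrite subUset hF hH.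
Qed.

Lemma pc_n0 (V : finType) r G (P : {set {set {set V}}}) A B F :
  partition P G -> partial_cluster r G P A B F -> F != set0.
Proof.
move=> hP; elim => [X XP | F1 H _ hF _ hH _].
  move/and3P: hP => [_ _ n0]; apply/negP => /eqP X0.
  by rewrite -X0 XP in n0.
rewrite -card_gt0 in hF; rewrite -card_gt0; exact: (leq_trans hF (subset_leq_card (subsetUl _ _))).
Qed.

Lemma block_pc (V : finType) r G (P : {set {set {set V}}}) A B X K :
  partition P G -> X \in P -> partial_cluster r G P A B K ->
  X \subset K \/ [disjoint X & K].
Proof.
move=> hP XP; elim => [Y YP | F H _ IHF _ IHH _].
  case: (eqVneq X Y) => [->|ne]; [by left | right].
  by move/and3P: hP => [_ /trivIsetP tI _]; exact: tI.
case: IHF => [s|d]; first by left; rewrite (subset_trans s) // subsetUl.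
case: IHH => [s|d']; first by left; rewrite (subset_trans s) // subsetUr.
by right; rewrite disjoint_sym disjUl -!(disjoint_sym X) d d'.
Qed.

Lemma find_merge (V : finType) r G (P : {set {set {set V}}}) A B K :
  partition P G -> partial_cluster r G P A B K ->
  forall F, partial_cluster r G P A B F -> ~~ (F \subset K) -> ~~ [disjoint F & K] ->
  exists H, [/\ partial_cluster r G P A B H, H \subset F, [disjoint H & K] &
                mergeable2 r G A B K H].
Proof.
move=> hP pK F pF; elim: pF => [X XP | F1 F2 p1 IH1 p2 IH2 m12] nsub ndis.
  by case: (block_pc hP XP pK) => h; rewrite h in nsub ndis.
have sK := pc_sub hP pK.
have [s1|ns1] := boolP (F1 \subset K); last first.
  have [d1|nd1] := boolP [disjoint F1 & K]; last first.
    have [H [pH sH dH mH]] := IH1 ns1 nd1; exists H; split => //.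
    by rewrite (subset_trans sH) // subsetUl.
  have [s2|ns2] := boolP (F2 \subset K); last first.
    have [d2|nd2] := boolP [disjoint F2 & K]; last first.
      have [H [pH sH dH mH]] := IH2 ns2 nd2; exists H; split => //.
      by rewrite (subset_trans sH) // subsetUr.
    by rewrite disjUl d1 d2 in ndis.
  exists F1; split => //; first by rewrite subsetUl.
  case: m12 => m; [right; apply: mergeR m s2 sK d1 | left; apply: mergeL m s2 sK _].
  by rewrite disjoint_sym.
have [s2|ns2] := boolP (F2 \subset K).
  by rewrite subUset s1 s2 in nsub.
have [d2|nd2] := boolP [disjoint F2 & K]; last first.
  have [H [pH sH dH mH]] := IH2 ns2 nd2; exists H; split => //.
  by rewrite (subset_trans sH) // subsetUr.
exists F2; split => //; first by rewrite subsetUr.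
case: m12 => m; [left; apply: mergeL m s1 sK _ | right; apply: mergeR m s1 sK d2].
by rewrite disjoint_sym.
Qed.

Theorem lemma5p2 (V : finType) (r : nat) (G : {set {set V}})
  (P : {set {set {set V}}}) (A B : nat -> Prop) :
  is_rgraph r G ->
  partition P G ->
  (forall F H, partial_cluster r G P A B F -> partial_cluster r G P A B H ->
     mergeable r G A B F H ->
     exists F' H', [/\ F' \in P, H' \in P, F' \subset F, H' \subset H &
                      mergeable r G A B F' H']) ->
  forall F F0, partial_cluster r G P A B F -> partial_cluster r G P A B F0 ->
    F0 \subset F ->
    exists s : seq {set {set V}},
      [/\ uniq s,
          (forall X, X \in s <-> (X \in P /\ X \subset F :\: F0)) &
          forall i, i < size s ->
            mergeable2 r G A B
              (F0 :|: \bigcup_(X <- take i s) X) (nth set0 s i)].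
Proof.
move=> _ hP hyp F F0 pF pF0 sF0.
have tI : trivIset P by case/and3P: hP.
suff: forall n F0, partial_cluster r G P A B F0 -> F0 \subset F ->
  #|F :\: F0| <= n ->
    exists s : seq {set {set V}},
      [/\ uniq s,
          (forall X, X \in s <-> (X \in P /\ X \subset F :\: F0)) &
          forall i, i < size s ->
            mergeable2 r G A B
              (F0 :|: \bigcup_(X <- take i s) X) (nth set0 s i)].
  by move/(_ _ F0 pF0 sF0 (leqnn _)).
elim => [|n IH] K pK sK hn.
- exists [::]; split => // X; split => // [[XP sX]].
  have: X != set0 := pc_n0 hP (pc_base r G A B XP).
  move: hn; rewrite leqn0 cards_eq0 => /eqP e.
  by rewrite e subset0 in sX; rewrite sX.
- have [sFK|nsFK] := boolP (F \subset K).
    exists [::]; split => // X; split => // [[XP sX]].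
    have: X != set0 := pc_n0 hP (pc_base r G A B XP).
    have : F :\: K = set0 by apply/eqP; rewrite setD_eq0.
    by move=> e; rewrite e subset0 in sX; rewrite sX.
  have ndis : ~~ [disjoint F & K].
    apply/negP => d.
    have := pc_n0 hP pK; rewrite -subset0.
    by move: d; rewrite disjoint_sym => /disjoint_setI0 <-; rewrite subsetIidl sK.
  have [H [pH sHF dHK mKH]] := find_merge hP pK pF nsFK ndis.
  have sKG := pc_sub hP pK.
  have [X [XP sXH mKX]] : exists X, [/\ X \in P, X \subset H & mergeable2 r G A B K X].
    case: mKH => m.
      have [F' [H' [F'P H'P sF' sH' m']]] := hyp _ _ pK pH m.
      exists H'; split => //; left; apply: mergeL m' sF' sKG _.
      by rewrite disjoint_sym (disjointWl sH') // .
    have [F' [H' [F'P H'P sF' sH' m']]] := hyp _ _ pH pK m.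
    exists F'; split => //; right; apply: mergeR m' sH' sKG _.
    by rewrite (disjointWl sF').
  have dXK : [disjoint X & K] by rewrite (disjointWl sXH).
  have X0 : X != set0 := pc_n0 hP (pc_base r G A B XP).
  have sXF : X \subset F := subset_trans sXH sHF.
  have pK' : partial_cluster r G P A B (K :|: X).
    by apply: pc_merge => //; exact: pc_base.
  have sK' : K :|: X \subset F by rewrite subUset sK.
  have sXD : X \subset F :\: K by rewrite subsetD sXF dXK.
  have hn' : #|F :\: (K :|: X)| <= n.
    rewrite -setDDl cardsDS //.
    have c1 := subset_leq_card sXD.
    have c2 : 0 < #|X| by rewrite card_gt0.
    rewrite leq_subLR; apply: leq_trans hn _.
    by rewrite -add1n leq_add2r.
  have [s [us ms hs]] := IH _ pK' sK' hn'.
  have Xs : X \notin s.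
    apply/negP => /ms [_ sX]; move: sX; rewrite subsetD => /andP [_ d].
    move: d; rewrite disjoint_sym disjUl => /andP [_ d].
    by move/disjoint_setI0: d; rewrite setIid => e; rewrite e eqxx in X0.
  exists (X :: s); split.
  + by rewrite /= Xs us.
  + move=> Y; rewrite in_cons; split.
      case/orP => [/eqP -> | /ms [YP sY]]; first by split.
      by split => //; apply: subset_trans sY (setDS _ (subsetUl _ _)).
    move=> [YP sY]; case: (eqVneq Y X) => [->|ne] //=; apply/ms; split => //.
    rewrite -setDDl subsetD sY andTb.
    by move/trivIsetP: tI => /(_ Y X YP XP ne).
  + case => [_|i hi] /=.
      by rewrite big_nil setU0.
    by rewrite big_cons setUA; apply: hs.
Qed.
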